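(* Let $a>0$, let $v:\mathbb{R}\to[v_0,\infty)$ be continuously differentiable with $v_0>0$, fix $r>a/v_0$, and let $C=C([-r,0],\mathbb{R})$ with the norm $|\phi|=\max_{-r\le t\le 0}|\phi(t)|$. For $\phi\in C$ let $\delta(\phi)\in(0,r)$ be the unique solution $u$ of $a=\int_{-u}^0 v(\phi(s))\,ds$. Then the map $\delta:C\to(0,r)$ is continuously differentiable with $$D\delta(\phi)\chi=-\frac{\int_{-\delta(\phi)}^0 v'(\phi(s))\chi(s)\,ds}{v(\phi(-\delta(\phi)))}\qquad(\chi\in C).$$ Moreover, if $\phi(s)=\xi$ for all $s\in[-r,0]$, then $\delta(\phi)=a/v(\xi)$ and $$D\delta(\phi)\chi=-\frac{v'(\xi)}{v(\xi)}\int_{-a/v(\xi)}^0\chi(s)\,ds.$$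
   Context: Since $v\ge v_0>0$ is continuous, for every $\phi\in C$ the equation $a=\int_{-u}^0 v(\phi(s))\,ds$ has a unique solution $u\in(0,r)$; this defines $\delta$. *)

(* Defs.v *)
From Stdlib Require Import Reals.
From Coquelicot Require Import Coquelicot.
Open Scope R_scope.

(* Elements of C = C([-r,0],R) are represented by functions phi : R -> R
   whose restriction to [-r,0] is continuous; values outside [-r,0]
   play no role. *)
Definition in_C (r : R) (phi : R -> R) : Prop :=
  forall t, -r <= t <= 0 ->
    forall eps, 0 < eps -> exists d, 0 < d /\
      forall s, -r <= s <= 0 -> Rabs (s - t) < d -> Rabs (phi s - phi t) < eps.

(* The max norm |phi| = max_{-r <= t <= 0} |phi(t)| (a sup, attained for
   continuous phi). *)
Definition normC (r : R) (phi : R -> R) : R :=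
  real (Lub_Rbar (fun y => exists t, -r <= t <= 0 /\ y = Rabs (phi t))).

Definition Ddelta (v v' : R -> R) (delta : (R -> R) -> R)
    (phi chi : R -> R) : R :=
  - RInt (fun s => v' (phi s) * chi s) (- delta phi) 0 / v (phi (- delta phi)).

(* Main.v *)
Require Import Defs.
From Stdlib Require Import Reals Lra.
From Coquelicot Require Import Coquelicot.
Open Scope R_scope.

Definition clamp (r s : R) := Rmax (-r) (Rmin 0 s).

Lemma clamp_in r s : 0 <= r -> -r <= clamp r s <= 0.
Proof. intros; unfold clamp, Rmax, Rmin; repeat destruct Rle_dec; lra. Qed.

Lemma clamp_id r s : -r <= s <= 0 -> clamp r s = s.
Proof. intros; unfold clamp, Rmax, Rmin; repeat destruct Rle_dec; lra. Qed.

Lemma clamp_lip r s t : 0 <= r -> Rabs (clamp r s - clamp r t) <= Rabs (s - t).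
Proof.
  intros; unfold clamp, Rmax, Rmin; repeat destruct Rle_dec;
  unfold Rabs; repeat destruct Rcase_abs; lra.
Qed.

Definition CC (r : R) (f : R -> R) := forall x, continuous (fun s => f (clamp r s)) x.

Lemma inC_CC r f : 0 <= r -> in_C r f -> CC r f.
Proof.
  intros Hr Hf x. apply continuity_pt_filterlim.
  unfold continuity_pt, continue_in, limit1_in, limit_in; simpl.
  intros eps Heps.
  destruct (Hf (clamp r x) (clamp_in r x Hr) eps Heps) as [d [Hd H]].
  exists d; split; auto. intros s [_ Hs]. unfold R_dist in *.
  apply H. apply clamp_in; auto.
  eapply Rle_lt_trans; [apply clamp_lip; auto| exact Hs].
Qed.

Lemma CC_inC r f : 0 <= r -> CC r f -> in_C r f.
Proof.
  intros Hr Hf t Ht eps Heps.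
  pose proof (proj2 (continuity_pt_filterlim _ t) (Hf t)) as H.
  unfold continuity_pt, continue_in, limit1_in, limit_in in H; simpl in H.
  destruct (H eps Heps) as [d [Hd H']].
  exists d; split; auto. intros s Hs Hst.
  specialize (H' s). unfold R_dist in H'. rewrite !clamp_id in H' by auto.
  destruct (Req_dec s t) as [->|Hne].
  { rewrite Rminus_eq_0, Rabs_R0; auto. }
  apply H'. split; [split; [exact I| auto] | auto].
Qed.

Lemma CC_ex_RInt r f a b : 0 <= r -> CC r f -> -r <= a <= 0 -> -r <= b <= 0 ->
  ex_RInt f a b.
Proof.
  intros Hr Hf Ha Hb.
  apply ex_RInt_ext with (fun s => f (clamp r s)).
  - intros x Hx. rewrite clamp_id; auto.
    revert Hx; unfold Rmin, Rmax; destruct Rle_dec; lra.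
  - apply (ex_RInt_continuous (V := R_CompleteNormedModule)); intros; apply Hf.
Qed.

Lemma CC_plus r f g : CC r f -> CC r g -> CC r (fun s => f s + g s).
Proof. intros Hf Hg x. exact (continuous_plus _ _ x (Hf x) (Hg x)). Qed.
Lemma CC_minus r f g : CC r f -> CC r g -> CC r (fun s => f s - g s).
Proof. intros Hf Hg x. exact (continuous_minus _ _ x (Hf x) (Hg x)). Qed.
Lemma CC_mult r f g : CC r f -> CC r g -> CC r (fun s => f s * g s).
Proof. intros Hf Hg x. exact (continuous_mult _ _ x (Hf x) (Hg x)). Qed.
Lemma CC_comp r F f : (forall y, continuous F y) -> CC r f -> CC r (fun s => F (f s)).
Proof. intros HF Hf x. exact (continuous_comp _ F x (Hf x) (HF _)). Qed.
Lemma CC_const r c : CC r (fun _ => c).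
Proof. intros x. apply continuous_const. Qed.

Lemma normC_ge r f : 0 <= r -> CC r f -> forall t, -r <= t <= 0 -> Rabs (f t) <= normC r f.
Proof.
  intros Hr Hf t Ht.
  assert (Hc : forall c, -r <= c <= 0 -> continuity_pt (fun s => Rabs (f (clamp r s))) c).
  { intros c _. apply continuity_pt_filterlim.
    exact (continuous_comp _ Rabs c (Hf c) (continuous_Rabs _)). }
  destruct (continuity_ab_maj _ (-r) 0 ltac:(lra) Hc) as [Mx [HM HMx]].
  unfold normC.
  set (E := fun y => exists t, -r <= t <= 0 /\ y = Rabs (f t)).
  destruct (Lub_Rbar_correct E) as [Hub Hlub].
  assert (H1 : Rbar_le (Rabs (f t)) (Lub_Rbar E)) by (apply Hub; exists t; auto).
  assert (H2 : Rbar_le (Lub_Rbar E) (Rabs (f (clamp r Mx)))).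
  { apply Hlub. intros y [s [Hs ->]]. simpl. specialize (HM s Hs).
    rewrite clamp_id in HM; auto. }
  destruct (Lub_Rbar E) as [l| |]; simpl in *; auto; contradiction.
Qed.

Lemma normC_ge0 r f : 0 <= r -> CC r f -> 0 <= normC r f.
Proof.
  intros Hr Hf. eapply Rle_trans; [apply Rabs_pos|]. apply (normC_ge r f Hr Hf 0). lra.
Qed.

Lemma normC_ext r f g : (forall t, -r <= t <= 0 -> f t = g t) -> normC r f = normC r g.
Proof.
  intros H. unfold normC. f_equal. apply Lub_Rbar_eqset.
  intros y; split; intros [t [Ht ->]]; exists t; split; auto; rewrite H; auto.
Qed.

Lemma RInt_abs_bound f a b M : ex_RInt f a b ->
  (forall t, Rmin a b <= t <= Rmax a b -> Rabs (f t) <= M) ->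
  Rabs (RInt f a b) <= Rabs (b - a) * M.
Proof.
  intros Hex HM. destruct (Rle_dec a b) as [Hab|Hab].
  - rewrite (Rabs_right (b - a)) by lra. apply abs_RInt_le_const; auto.
    intros t Ht; apply HM. rewrite Rmin_left, Rmax_right; lra.
  - rewrite <- (opp_RInt_swap f b a) by (apply ex_RInt_swap; auto). change (opp (RInt f b a)) with (- RInt f b a).
    rewrite Rabs_Ropp, (Rabs_left (b - a)) by lra. replace (- (b - a)) with (a - b) by ring.
    apply abs_RInt_le_const; [lra | apply ex_RInt_swap; auto |].
    intros t Ht; apply HM. rewrite Rmin_right, Rmax_left; lra.
Qed.

Lemma RInt_abs_lower f a b m : ex_RInt f a b -> 0 <= m ->
  (forall t, Rmin a b <= t <= Rmax a b -> m <= f t) ->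
  Rabs (b - a) * m <= Rabs (RInt f a b).
Proof.
  intros Hex Hm H. destruct (Rle_dec a b) as [Hab|Hab].
  - rewrite (Rabs_right (b - a)) by lra.
    assert (HI : RInt (fun _ => m) a b <= RInt f a b).
    { apply RInt_le; auto. apply ex_RInt_const.
      intros x Hx; apply H. rewrite Rmin_left, Rmax_right; lra. }
    rewrite RInt_const in HI. change (scal (b - a) m) with ((b - a) * m) in HI.
    eapply Rle_trans; [exact HI| apply Rle_abs].
  - rewrite <- (opp_RInt_swap f b a) by (apply ex_RInt_swap; auto). change (opp (RInt f b a)) with (- RInt f b a).
    rewrite Rabs_Ropp, (Rabs_left (b - a)) by lra.
    assert (HI : RInt (fun _ => m) b a <= RInt f b a).
    { apply RInt_le; [lra| apply ex_RInt_const | apply ex_RInt_swap; auto|].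
      intros x Hx; apply H. rewrite Rmin_right, Rmax_left; lra. }
    rewrite RInt_const in HI. change (scal (a - b) m) with ((a - b) * m) in HI.
    replace (- (b - a)) with (a - b) by ring.
    eapply Rle_trans; [exact HI| apply Rle_abs].
Qed.

Lemma unif_cont F M eps : (forall y, continuous F y) -> 0 < eps ->
  exists d, 0 < d /\ forall x y, -M <= x <= M -> -M <= y <= M -> Rabs (x - y) < d ->
    Rabs (F x - F y) < eps.
Proof.
  intros HF He.
  assert (H := Heine F (fun c => -M <= c <= M) (compact_P3 (-M) M)
    (fun x _ => proj2 (continuity_pt_filterlim F x) (HF x))).
  destruct (H (mkposreal eps He)) as [d Hd].
  exists d; split; [apply cond_pos|]. intros; apply Hd; auto.
Qed.

Lemma bound_on F M : (forall y, continuous F y) ->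
  exists L, 0 <= L /\ forall x, -M <= x <= M -> Rabs (F x) <= L.
Proof.
  intros HF. destruct (Rle_dec (-M) M) as [HM|HM].
  - assert (Hc : forall c, -M <= c <= M -> continuity_pt (fun s => Rabs (F s)) c).
    { intros c _. apply continuity_pt_filterlim.
      exact (continuous_comp _ Rabs c (HF c) (continuous_Rabs _)). }
    destruct (continuity_ab_maj _ (-M) M HM Hc) as [Mx [H1 H2]].
    exists (Rabs (F Mx)); split; [apply Rabs_pos| auto].
  - exists 0; split; [lra|]. intros; lra.
Qed.

Lemma mvt_v (v v' : R -> R) (x y : R) : (forall z, is_derive v z (v' z)) ->
  exists c, Rmin y x <= c <= Rmax y x /\ v x - v y = v' c * (x - y).
Proof.
  intros Hd. apply (MVT_gen v y x v').
  - intros; auto.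
  - intros z _. apply continuity_pt_filterlim.
    apply (ex_derive_continuous (K := R_AbsRing) (V := R_NormedModule)). exists (v' z); auto.
Qed.

Lemma v_lip (v v' : R -> R) (M L : R) : (forall x, is_derive v x (v' x)) ->
  (forall x, -M <= x <= M -> Rabs (v' x) <= L) ->
  forall x y, -M <= x <= M -> -M <= y <= M -> Rabs (v x - v y) <= L * Rabs (x - y).
Proof.
  intros Hd HL x y Hx Hy.
  destruct (mvt_v v v' x y Hd) as [c [Hc ->]].
  rewrite Rabs_mult. apply Rmult_le_compat_r; [apply Rabs_pos|].
  apply HL. revert Hc; unfold Rmin, Rmax; destruct Rle_dec; lra.
Qed.

Lemma v_taylor (v v' : R -> R) (M eps d : R) : (forall x, is_derive v x (v' x)) -> 0 <= eps ->
  (forall x y, -M <= x <= M -> -M <= y <= M -> Rabs (x - y) < d -> Rabs (v' x - v' y) < eps) ->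
  forall x y, -M <= x <= M -> -M <= y <= M -> Rabs (x - y) < d ->
  Rabs (v x - v y - v' y * (x - y)) <= eps * Rabs (x - y).
Proof.
  intros Hd He HU x y Hx Hy Hxy.
  destruct (mvt_v v v' x y Hd) as [c [Hc Hv]]. rewrite Hv.
  replace (v' c * (x - y) - v' y * (x - y)) with ((v' c - v' y) * (x - y)) by ring.
  rewrite Rabs_mult. apply Rmult_le_compat_r; [apply Rabs_pos|].
  left. apply HU.
  - revert Hc; unfold Rmin, Rmax; destruct Rle_dec; lra.
  - auto.
  - eapply Rle_lt_trans; [|exact Hxy].
    revert Hc; unfold Rmin, Rmax, Rabs; destruct Rle_dec; repeat destruct Rcase_abs; lra.
Qed.

Lemma Rlt_min_inv x a b : x < Rmin a b -> x < a /\ x < b.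
Proof. unfold Rmin; destruct Rle_dec; lra. Qed.

Lemma Rabs_le_betw x N : Rabs x <= N -> -N <= x <= N.
Proof. unfold Rabs; destruct Rcase_abs; lra. Qed.

Lemma between_in r a b t : -r <= a <= 0 -> -r <= b <= 0 -> Rmin a b <= t <= Rmax a b -> -r <= t <= 0.
Proof. unfold Rmin, Rmax; destruct Rle_dec; lra. Qed.

Lemma div_bound v0 x X V : 0 < v0 -> v0 <= V -> Rabs x <= X -> Rabs (x / V) <= X / v0.
Proof.
  intros H0 HV Hx. unfold Rdiv. rewrite Rabs_mult, Rabs_inv, (Rabs_right V) by lra.
  apply Rmult_le_compat; auto; [apply Rabs_pos| left; apply Rinv_0_lt_compat; lra|].
  apply Rinv_le_contravar; lra.
Qed.

Lemma lt_div_mul x y k : 0 < k -> x < y / k -> x * k < y.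
Proof. intros Hk H. replace y with (y / k * k) by (field; lra). apply Rmult_lt_compat_r; lra. Qed.

Theorem proposition2p1
  (a v0 r : R) (v v' : R -> R) (delta : (R -> R) -> R)
  (Ha : 0 < a) (Hv0 : 0 < v0)
  (Hvlb : forall x, v0 <= v x)
  (Hvder : forall x, is_derive v x (v' x))
  (Hv'cont : forall x, continuous v' x)
  (Hr : a / v0 < r)
  (Hdelta : forall phi, in_C r phi ->
     0 < delta phi < r /\ a = RInt (fun s => v (phi s)) (- delta phi) 0) :
  (forall phi, in_C r phi ->
     (exists M, forall chi, in_C r chi ->
        Rabs (Ddelta v v' delta phi chi) <= M * normC r chi) /\
     (forall eps, 0 < eps -> exists d, 0 < d /\
        forall chi, in_C r chi -> normC r chi < d ->
          Rabs (delta (fun s => phi s + chi s) - delta phi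
                - Ddelta v v' delta phi chi) <= eps * normC r chi)) /\
  (forall phi, in_C r phi ->
     forall eps, 0 < eps -> exists d, 0 < d /\
       forall psi, in_C r psi -> normC r (fun s => psi s - phi s) < d ->
         forall chi, in_C r chi ->
           Rabs (Ddelta v v' delta psi chi - Ddelta v v' delta phi chi)
             <= eps * normC r chi) /\
  (forall phi xi, in_C r phi -> (forall s, -r <= s <= 0 -> phi s = xi) ->
     delta phi = a / v xi /\
     forall chi, in_C r chi ->
       Ddelta v v' delta phi chi
         = - (v' xi / v xi) * RInt chi (- (a / v xi)) 0).
Proof.
  assert (Hr0 : 0 < r). { assert (0 < a / v0) by (apply Rdiv_lt_0_compat; auto). lra. }
  assert (Hr0' : 0 <= r) by lra.
  assert (Hvc : forall y, continuous v y).
  { intros y. apply (ex_derive_continuous (K := R_AbsRing) (V := R_NormedModule)).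
    exists (v' y); auto. }
  assert (Hvpos : forall x, 0 < v x) by (intros x; specialize (Hvlb x); lra).
  assert (Ex : forall f a' b', CC r f -> -r <= a' <= 0 -> -r <= b' <= 0 -> ex_RInt f a' b')
    by (intros; apply CC_ex_RInt with r; auto).
  assert (Hdr : forall phi, in_C r phi -> -r <= - delta phi <= 0).
  { intros phi Hphi; destruct (Hdelta phi Hphi) as [H _]; lra. }
  assert (Hz : -r <= 0 <= 0) by lra.
  assert (Hrange : forall f, CC r f -> forall t, -r <= t <= 0 -> - normC r f <= f t <= normC r f).
  { intros f Hf t Ht. apply Rabs_le_betw. apply normC_ge; auto. }
  assert (Hident : forall phi psi, in_C r phi -> in_C r psi ->
     RInt (fun s => v (psi s)) (- delta psi) (- delta phi) =
     - RInt (fun s => v (psi s) - v (phi s)) (- delta phi) 0).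
  { intros phi psi Hphi Hpsi.
    destruct (Hdelta phi Hphi) as [Hd0 Ha0]. destruct (Hdelta psi Hpsi) as [Hd1 Ha1].
    pose proof (inC_CC r phi Hr0' Hphi) as Cphi. pose proof (inC_CC r psi Hr0' Hpsi) as Cpsi.
    pose proof (CC_comp r v phi Hvc Cphi) as Cvphi.
    pose proof (CC_comp r v psi Hvc Cpsi) as Cvpsi.
    pose proof (Hdr phi Hphi). pose proof (Hdr psi Hpsi).
    assert (H1 : RInt (fun s => v (psi s) - v (phi s)) (- delta phi) 0 =
       RInt (fun s => v (psi s)) (- delta phi) 0 - RInt (fun s => v (phi s)) (- delta phi) 0).
    { apply (RInt_minus (V := R_CompleteNormedModule)); apply Ex; auto. }
    assert (H2 : RInt (fun s => v (psi s)) (- delta psi) (- delta phi) +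
                 RInt (fun s => v (psi s)) (- delta phi) 0 =
                 RInt (fun s => v (psi s)) (- delta psi) 0).
    { apply (RInt_Chasles (V := R_CompleteNormedModule)); apply Ex; auto. }
    lra. }
  assert (Hlip : forall phi psi M L, in_C r phi -> in_C r psi -> 0 <= L ->
    (forall x, -M <= x <= M -> Rabs (v' x) <= L) ->
    (forall t, -r <= t <= 0 -> -M <= phi t <= M /\ -M <= psi t <= M) ->
    Rabs (delta psi - delta phi) <= r * L / v0 * normC r (fun s => psi s - phi s)).
  { intros phi psi M L Hphi Hpsi HL0 HL Hbd.
    destruct (Hdelta phi Hphi) as [Hd0 Ha0]. destruct (Hdelta psi Hpsi) as [Hd1 Ha1].
    pose proof (inC_CC r phi Hr0' Hphi) as Cphi. pose proof (inC_CC r psi Hr0' Hpsi) as Cpsi.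
    pose proof (CC_comp r v phi Hvc Cphi) as Cvphi.
    pose proof (CC_comp r v psi Hvc Cpsi) as Cvpsi.
    pose proof (Hdr phi Hphi). pose proof (Hdr psi Hpsi).
    pose proof (CC_minus r _ _ Cpsi Cphi) as Ch.
    set (n := normC r (fun s => psi s - phi s)).
    assert (Hn0 : 0 <= n) by (apply normC_ge0; auto).
    assert (Hn : forall t, -r <= t <= 0 -> Rabs (psi t - phi t) <= n)
      by (intros t Ht; apply (normC_ge r (fun s => psi s - phi s)); auto).
    assert (Hlow : Rabs (- delta phi - - delta psi) * v0 <=
                   Rabs (RInt (fun s => v (psi s)) (- delta psi) (- delta phi))).
    { apply RInt_abs_lower; [apply Ex; auto | lra | intros; apply Hvlb]. }
    assert (Hup : Rabs (RInt (fun s => v (psi s) - v (phi s)) (- delta phi) 0)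
                  <= Rabs (0 - - delta phi) * (L * n)).
    { apply RInt_abs_bound; [apply Ex; auto; apply CC_minus; auto|].
      intros t Ht. pose proof (between_in r _ _ t H Hz Ht) as Ht'.
      destruct (Hbd t Ht') as [Hb1 Hb2].
      eapply Rle_trans; [apply (v_lip v v' M L); auto|].
      apply Rmult_le_compat_l; auto. }
    rewrite Hident in Hlow by auto. rewrite Rabs_Ropp in Hlow.
    rewrite (Rabs_right (0 - - delta phi)) in Hup by lra.
    replace (- delta phi - - delta psi) with (delta psi - delta phi) in Hlow by ring.
    apply Rmult_le_reg_l with v0; auto.
    replace (v0 * (r * L / v0 * n)) with (r * (L * n)) by (field; lra).
    assert (delta phi * (L * n) <= r * (L * n)).
    { apply Rmult_le_compat_r; [apply Rmult_le_pos|]; lra. }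
    lra. }
  split; [|split].
  -
    intros phi Hphi.
    pose proof (inC_CC r phi Hr0' Hphi) as Cphi.
    destruct (Hdelta phi Hphi) as [Hd0 Ha0].
    pose proof (Hdr phi Hphi) as Hd0r.
    set (B := normC r phi).
    assert (HB0 : 0 <= B) by (apply normC_ge0; auto).
    destruct (bound_on v' (B + 1) Hv'cont) as [L [HL0 HL]].
    pose proof (Hrange phi Cphi) as HphiB. fold B in HphiB.
    unfold Ddelta.
    set (d0 := delta phi) in *.
    set (V0 := v (phi (- d0))).
    assert (HV0 : v0 <= V0) by apply Hvlb.
    split.
    + exists (r * L / v0). intros chi Hchi.
      pose proof (inC_CC r chi Hr0' Hchi) as Cchi.
      set (N := normC r chi).
      assert (HN0 : 0 <= N) by (apply normC_ge0; auto).
      replace (- RInt (fun s => v' (phi s) * chi s) (- d0) 0 / V0) with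
        (- (RInt (fun s => v' (phi s) * chi s) (- d0) 0 / V0)) by (field; lra).
      rewrite Rabs_Ropp.
      replace (r * L / v0 * N) with ((r * (L * N)) / v0) by (field; lra).
      apply div_bound; auto.
      eapply Rle_trans; [apply RInt_abs_bound|].
      * apply Ex; auto. apply CC_mult; auto. apply CC_comp; auto.
      * intros t Ht. pose proof (between_in r _ _ t Hd0r Hz Ht) as Ht'.
        rewrite Rabs_mult. apply Rmult_le_compat; try apply Rabs_pos.
        -- apply HL. specialize (HphiB t Ht'). lra.
        -- apply (normC_ge r chi); auto.
      * rewrite (Rabs_right (0 - - d0)) by lra.
        apply Rmult_le_compat_r; [apply Rmult_le_pos|]; lra.
    + intros eps Heps.
      set (K := r * L / v0).
      assert (HK : 0 <= K).
      { unfold K, Rdiv. apply Rmult_le_pos; [nra| left; apply Rinv_0_lt_compat; lra]. }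
      set (e1 := eps * v0 / (2 * r)).
      assert (He1 : 0 < e1) by (unfold e1; apply Rdiv_lt_0_compat; nra).
      destruct (unif_cont v' (B + 1) e1 Hv'cont He1) as [du [Hdu HU]].
      set (e2 := eps * v0 / (2 * (K + 1))).
      assert (He2 : 0 < e2) by (unfold e2; apply Rdiv_lt_0_compat; nra).
      set (e3 := e2 / (2 * (L + 1))).
      assert (He3 : 0 < e3) by (unfold e3; apply Rdiv_lt_0_compat; nra).
      destruct (Hphi (- d0) Hd0r e3 He3) as [dp [Hdp HP]].
      exists (Rmin (Rmin 1 du) (Rmin e3 (dp / (K + 1)))).
      split.
      { repeat apply Rmin_pos; try lra. apply Rdiv_lt_0_compat; lra. }
      intros chi Hchi HN.
      pose proof (inC_CC r chi Hr0' Hchi) as Cchi.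
      set (N := normC r chi) in *.
      assert (HN0 : 0 <= N) by (apply normC_ge0; auto).
      destruct (Rlt_min_inv _ _ _ HN) as [HNa HNb].
      destruct (Rlt_min_inv _ _ _ HNa) as [HN1 HNdu].
      destruct (Rlt_min_inv _ _ _ HNb) as [HNe3 HNdp].
      apply lt_div_mul in HNdp; [|lra].
      assert (Hchib : forall t, -r <= t <= 0 -> Rabs (chi t) <= N)
        by (intros; apply (normC_ge r chi); auto).
      set (psi := fun s => phi s + chi s).
      assert (Cpsi : CC r psi) by (apply CC_plus; auto).
      assert (Hpsi : in_C r psi) by (apply CC_inC; auto).
      assert (HnN : normC r (fun s => psi s - phi s) = N).
      { apply normC_ext. intros; unfold psi; ring. }
      assert (Hbd : forall t, -r <= t <= 0 -> -(B+1) <= phi t <= B+1 /\ -(B+1) <= psi t <= B+1).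
      { intros t Ht. specialize (HphiB t Ht). pose proof (Rabs_le_betw _ _ (Hchib t Ht)).
        unfold psi; split; lra. }
      pose proof (Hlip phi psi (B + 1) L Hphi Hpsi HL0 HL Hbd) as HLd.
      rewrite HnN in HLd. fold K in HLd. fold d0 in HLd.
      destruct (Hdelta psi Hpsi) as [Hd1 Ha1].
      pose proof (Hdr psi Hpsi) as Hd1r.
      set (d1 := delta psi) in *.
      pose proof (Hident phi psi Hphi Hpsi) as E3. fold d0 d1 in E3.
      pose proof (CC_comp r v phi Hvc Cphi) as Cvphi.
      pose proof (CC_comp r v psi Hvc Cpsi) as Cvpsi.
      pose proof (CC_comp r v' phi Hv'cont Cphi) as Cv'phi.
      set (A := RInt (fun s => v' (phi s) * chi s) (- d0) 0).
      set (R1 := RInt (fun s => v (psi s) - v (phi s) - v' (phi s) * chi s) (- d0) 0).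
      set (R2 := RInt (fun s => v (psi s) - V0) (- d1) (- d0)).
      assert (E1 : R1 = RInt (fun s => v (psi s) - v (phi s)) (- d0) 0 - A).
      { unfold R1, A. apply (RInt_minus (V := R_CompleteNormedModule)); apply Ex; auto.
        - apply CC_minus; auto.
        - apply CC_mult; auto. }
      assert (E2 : R2 = RInt (fun s => v (psi s)) (- d1) (- d0) - (d1 - d0) * V0).
      { unfold R2.
        assert (HH : RInt (fun s => v (psi s) - V0) (- d1) (- d0) =
          RInt (fun s => v (psi s)) (- d1) (- d0) - RInt (fun _ => V0) (- d1) (- d0)).
        { apply (RInt_minus (V := R_CompleteNormedModule)); apply Ex; auto; apply CC_const. }
        rewrite HH, RInt_const. change (scal (- d0 - - d1) V0) with ((- d0 - - d1) * V0).
        replace (- d0 - - d1) with (d1 - d0) by ring. reflexivity. }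
      assert (Hlin : (d1 - d0) * V0 = - R1 - A - R2) by lra.
      assert (Heq : d1 - d0 - - A / V0 = (- R1 - R2) / V0).
      { replace (d1 - d0 - - A / V0) with (((d1 - d0) * V0 + A) / V0) by (field; lra).
        rewrite Hlin. field; lra. }
      fold A. rewrite Heq.
      assert (HR1 : Rabs R1 <= Rabs (0 - - d0) * (e1 * N)).
      { apply RInt_abs_bound.
        - apply Ex; auto. apply CC_minus; [apply CC_minus; auto| apply CC_mult; auto].
        - intros t Ht. pose proof (between_in r _ _ t Hd0r Hz Ht) as Ht'.
          destruct (Hbd t Ht') as [Hb1 Hb2].
          replace (chi t) with (psi t - phi t) by (unfold psi; ring).
          eapply Rle_trans; [apply (v_taylor v v' (B + 1) e1 du); auto; try lra|].
          + replace (psi t - phi t) with (chi t) by (unfold psi; ring).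
            specialize (Hchib t Ht'). lra.
          + replace (psi t - phi t) with (chi t) by (unfold psi; ring).
            apply Rmult_le_compat_l; [lra| auto]. }
      assert (HR2 : Rabs R2 <= Rabs (- d0 - - d1) * e2).
      { apply RInt_abs_bound.
        - apply Ex; auto. apply CC_minus; auto; apply CC_const.
        - intros t Ht. pose proof (between_in r _ _ t Hd1r Hd0r Ht) as Ht'.
          destruct (Hbd t Ht') as [Hb1 Hb2].
          assert (Htd : Rabs (t - - d0) < dp).
          { assert (Rabs (t - - d0) <= Rabs (d1 - d0)).
            { revert Ht; unfold Rmin, Rmax, Rabs; destruct Rle_dec;
                repeat destruct Rcase_abs; lra. }
            nra. }
          specialize (HP t Ht' Htd).
          assert (Hv1 : Rabs (v (psi t) - v (phi t)) <= L * Rabs (psi t - phi t))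
            by (apply (v_lip v v' (B + 1) L); auto).
          assert (Hv2 : Rabs (v (phi t) - V0) <= L * Rabs (phi t - phi (- d0))).
          { apply (v_lip v v' (B + 1) L); auto. apply HphiB in Hd0r. lra. }
          replace (psi t - phi t) with (chi t) in Hv1 by (unfold psi; ring).
          specialize (Hchib t Ht').
          assert (He3eq : e3 * (2 * (L + 1)) = e2) by (unfold e3; field; lra).
          replace (v (psi t) - V0) with ((v (psi t) - v (phi t)) + (v (phi t) - V0)) by ring.
          eapply Rle_trans; [apply Rabs_triang|].
          assert (L * Rabs (chi t) <= L * e3) by (apply Rmult_le_compat_l; lra).
          assert (L * Rabs (phi t - phi (- d0)) <= L * e3) by (apply Rmult_le_compat_l; lra).
          nra. }
      rewrite (Rabs_right (0 - - d0)) in HR1 by lra.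
      replace (- d0 - - d1) with (d1 - d0) in HR2 by ring.
      replace (eps * N) with ((eps * N * v0) / v0) by (field; lra).
      apply div_bound; auto.
      assert (Hre1 : r * e1 = eps * v0 / 2) by (unfold e1; field; lra).
      assert (Hke2 : e2 * (2 * (K + 1)) = eps * v0) by (unfold e2; field; lra).
      assert (d0 * (e1 * N) <= r * (e1 * N)) by (apply Rmult_le_compat_r; nra).
      assert (Rabs (d1 - d0) * e2 <= K * N * e2) by (apply Rmult_le_compat_r; lra).
      assert (K * N * e2 <= N * (eps * v0 / 2)) by nra.

      replace (- R1 - R2) with (- (R1 + R2)) by ring. rewrite Rabs_Ropp.
      eapply Rle_trans; [apply Rabs_triang|]. nra.
  - intros phi Hphi eps Heps.
    pose proof (inC_CC r phi Hr0' Hphi) as Cphi.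
    destruct (Hdelta phi Hphi) as [Hd0 Ha0].
    pose proof (Hdr phi Hphi) as Hd0r.
    set (B := normC r phi).
    assert (HB0 : 0 <= B) by (apply normC_ge0; auto).
    destruct (bound_on v' (B + 1) Hv'cont) as [L [HL0 HL]].
    pose proof (Hrange phi Cphi) as HphiB. fold B in HphiB.
    set (d0 := delta phi) in *.
    set (V0 := v (phi (- d0))).
    assert (HV0 : v0 <= V0) by apply Hvlb.
    set (K := r * L / v0).
    assert (HK : 0 <= K).
    { unfold K, Rdiv. apply Rmult_le_pos; [nra| left; apply Rinv_0_lt_compat; lra]. }
    set (e3 := eps * v0 * v0 / (3 * (r * L + 1))).
    assert (He3 : 0 < e3).
    { unfold e3; apply Rdiv_lt_0_compat; [|nra]. apply Rmult_lt_0_compat; nra. }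
    set (e4 := eps * v0 / (3 * (r + 1))).
    assert (He4 : 0 < e4) by (unfold e4; apply Rdiv_lt_0_compat; nra).
    destruct (unif_cont v' (B + 1) e4 Hv'cont He4) as [du [Hdu HU]].
    set (e5 := e3 / (2 * (L + 1))).
    assert (He5 : 0 < e5) by (unfold e5; apply Rdiv_lt_0_compat; nra).
    destruct (Hphi (- d0) Hd0r e5 He5) as [dp [Hdp HP]].
    set (e6 := eps * v0 / (3 * (K * L + 1))).
    assert (He6 : 0 < e6) by (unfold e6; apply Rdiv_lt_0_compat; nra).
    exists (Rmin (Rmin 1 du) (Rmin e5 (Rmin (dp / (K + 1)) e6))).
    split.
    { repeat apply Rmin_pos; try lra. apply Rdiv_lt_0_compat; lra. }
    intros psi Hpsi Hn chi Hchi.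
    pose proof (inC_CC r psi Hr0' Hpsi) as Cpsi.
    pose proof (inC_CC r chi Hr0' Hchi) as Cchi.
    pose proof (CC_minus r _ _ Cpsi Cphi) as Ch.
    set (n := normC r (fun s => psi s - phi s)) in *.
    set (N := normC r chi).
    assert (Hn0 : 0 <= n) by (apply normC_ge0; auto).
    assert (HN0 : 0 <= N) by (apply normC_ge0; auto).
    destruct (Rlt_min_inv _ _ _ Hn) as [Hna Hnb].
    destruct (Rlt_min_inv _ _ _ Hna) as [Hn1 Hndu].
    destruct (Rlt_min_inv _ _ _ Hnb) as [Hne5 Hnc].
    destruct (Rlt_min_inv _ _ _ Hnc) as [Hndp Hne6].
    apply lt_div_mul in Hndp; [|lra].
    assert (Hchib : forall t, -r <= t <= 0 -> Rabs (chi t) <= N)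
      by (intros; apply (normC_ge r chi); auto).
    assert (Hhb : forall t, -r <= t <= 0 -> Rabs (psi t - phi t) <= n)
      by (intros; apply (normC_ge r (fun s => psi s - phi s)); auto).
    assert (Hbd : forall t, -r <= t <= 0 -> -(B+1) <= phi t <= B+1 /\ -(B+1) <= psi t <= B+1).
    { intros t Ht. specialize (HphiB t Ht). pose proof (Rabs_le_betw _ _ (Hhb t Ht)).
      split; lra. }
    pose proof (Hlip phi psi (B + 1) L Hphi Hpsi HL0 HL Hbd) as HLd.
    fold n K d0 in HLd.
    destruct (Hdelta psi Hpsi) as [Hd1 Ha1].
    pose proof (Hdr psi Hpsi) as Hd1r.
    set (d1 := delta psi) in *.
    pose proof (CC_comp r v' phi Hv'cont Cphi) as Cv'phi.
    pose proof (CC_comp r v' psi Hv'cont Cpsi) as Cv'psi.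
    unfold Ddelta. fold d0 d1 V0.
    set (Vp := v (psi (- d1))).
    assert (HVp : v0 <= Vp) by apply Hvlb.
    set (Ap := RInt (fun s => v' (psi s) * chi s) (- d1) 0).
    set (Af := RInt (fun s => v' (phi s) * chi s) (- d0) 0).
    assert (Hal : - Ap / Vp - - Af / V0 = Af * (Vp - V0) / (Vp * V0) + (Af - Ap) / Vp)
      by (field; lra).
    rewrite Hal.
    assert (HAf : Rabs Af <= r * L * N).
    { unfold Af. eapply Rle_trans; [apply RInt_abs_bound|].
      - apply Ex; auto. apply CC_mult; auto.
      - intros t Ht. pose proof (between_in r _ _ t Hd0r Hz Ht) as Ht'.
        rewrite Rabs_mult. apply Rmult_le_compat; try apply Rabs_pos.
        + apply HL. apply Hbd; auto.
        + apply Hchib; auto.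
      - rewrite (Rabs_right (0 - - d0)) by lra.
        assert (d0 * (L * N) <= r * (L * N)) by (apply Rmult_le_compat_r; nra).
        lra. }
    assert (HdV : Rabs (Vp - V0) <= e3).
    { assert (Hv1 : Rabs (v (psi (- d1)) - v (phi (- d1))) <= L * Rabs (psi (- d1) - phi (- d1)))
        by (apply (v_lip v v' (B + 1) L); auto; apply Hbd; auto).
      assert (Hv2 : Rabs (v (phi (- d1)) - v (phi (- d0))) <= L * Rabs (phi (- d1) - phi (- d0)))
        by (apply (v_lip v v' (B + 1) L); auto; apply Hbd; auto).
      assert (Htd : Rabs (- d1 - - d0) < dp).
      { replace (- d1 - - d0) with (- (d1 - d0)) by ring. rewrite Rabs_Ropp. nra. }
      specialize (HP (- d1) Hd1r Htd).
      specialize (Hhb (- d1) Hd1r).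
      assert (L * Rabs (psi (- d1) - phi (- d1)) <= L * e5) by (apply Rmult_le_compat_l; lra).
      assert (L * Rabs (phi (- d1) - phi (- d0)) <= L * e5) by (apply Rmult_le_compat_l; lra).
      assert (He5eq : e5 * (2 * (L + 1)) = e3) by (unfold e5; field; lra).
      unfold Vp, V0.
      replace (v (psi (- d1)) - v (phi (- d0))) with
        ((v (psi (- d1)) - v (phi (- d1))) + (v (phi (- d1)) - v (phi (- d0)))) by ring.
      eapply Rle_trans; [apply Rabs_triang|]. nra. }
    assert (HdA : Rabs (Af - Ap) <= eps * v0 / 3 * N + eps * v0 / 3 * N).
    { assert (Hch : RInt (fun s => v' (psi s) * chi s) (- d1) (- d0) +
                    RInt (fun s => v' (psi s) * chi s) (- d0) 0 = Ap).
      { apply (RInt_Chasles (V := R_CompleteNormedModule)); apply Ex; auto; apply CC_mult; auto. }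
      assert (Hmi : RInt (fun s => v' (psi s) * chi s - v' (phi s) * chi s) (- d0) 0 =
                    RInt (fun s => v' (psi s) * chi s) (- d0) 0 - Af).
      { apply (RInt_minus (V := R_CompleteNormedModule)); apply Ex; auto; apply CC_mult; auto. }
      assert (Hb1 : Rabs (RInt (fun s => v' (psi s) * chi s) (- d1) (- d0)) <=
                    Rabs (- d0 - - d1) * (L * N)).
      { apply RInt_abs_bound; [apply Ex; auto; apply CC_mult; auto|].
        intros t Ht. pose proof (between_in r _ _ t Hd1r Hd0r Ht) as Ht'.
        rewrite Rabs_mult. apply Rmult_le_compat; try apply Rabs_pos.
        + apply HL. apply Hbd; auto.
        + apply Hchib; auto. }
      assert (Hb2 : Rabs (RInt (fun s => v' (psi s) * chi s - v' (phi s) * chi s) (- d0) 0) <=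
                    Rabs (0 - - d0) * (e4 * N)).
      { apply RInt_abs_bound; [apply Ex; auto; apply CC_minus; apply CC_mult; auto|].
        intros t Ht. pose proof (between_in r _ _ t Hd0r Hz Ht) as Ht'.
        replace (v' (psi t) * chi t - v' (phi t) * chi t) with ((v' (psi t) - v' (phi t)) * chi t)
          by ring.
        rewrite Rabs_mult. apply Rmult_le_compat; try apply Rabs_pos.
        + left. apply HU; try apply Hbd; auto. specialize (Hhb t Ht'). lra.
        + apply Hchib; auto. }
      replace (- d0 - - d1) with (d1 - d0) in Hb1 by ring.
      rewrite (Rabs_right (0 - - d0)) in Hb2 by lra.
      assert (Hx1 : Rabs (d1 - d0) * L <= eps * v0 / 3).
      { assert (Rabs (d1 - d0) * L <= K * n * L) by (apply Rmult_le_compat_r; lra).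
        assert (K * L * n <= K * L * e6) by (apply Rmult_le_compat_l; nra).
        assert (He6eq : e6 * (3 * (K * L + 1)) = eps * v0) by (unfold e6; field; nra).
        nra. }
      assert (Hx2 : d0 * e4 <= eps * v0 / 3).
      { assert (He4eq : e4 * (3 * (r + 1)) = eps * v0) by (unfold e4; field; lra).
        nra. }
      assert (Rabs (d1 - d0) * (L * N) <= eps * v0 / 3 * N).
      { replace (Rabs (d1 - d0) * (L * N)) with (Rabs (d1 - d0) * L * N) by ring.
        apply Rmult_le_compat_r; lra. }
      assert (d0 * (e4 * N) <= eps * v0 / 3 * N).
      { replace (d0 * (e4 * N)) with (d0 * e4 * N) by ring.
        apply Rmult_le_compat_r; lra. }
      replace (Af - Ap) with (- (RInt (fun s => v' (psi s) * chi s) (- d1) (- d0) +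
          (RInt (fun s => v' (psi s) * chi s) (- d0) 0 - Af))) by (rewrite <- Hch; ring).
      rewrite Rabs_Ropp, <- Hmi.
      eapply Rle_trans; [apply Rabs_triang|]. lra. }
    assert (HT1 : Rabs (Af * (Vp - V0) / (Vp * V0)) <= (eps * v0 * v0 / 3 * N) / (v0 * v0)).
    { apply div_bound; [nra| apply Rmult_le_compat; lra|].
      rewrite Rabs_mult.
      assert (Rabs Af * Rabs (Vp - V0) <= r * L * N * e3).
      { apply Rmult_le_compat; try apply Rabs_pos; auto. }
      assert (He3eq : e3 * (3 * (r * L + 1)) = eps * v0 * v0) by (unfold e3; field; nra).
      assert (r * L * e3 <= eps * v0 * v0 / 3) by nra.
      assert (r * L * e3 * N <= eps * v0 * v0 / 3 * N) by (apply Rmult_le_compat_r; lra).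
      nra. }
    assert (HT2 : Rabs ((Af - Ap) / Vp) <= (eps * v0 / 3 * N + eps * v0 / 3 * N) / v0)
      by (apply div_bound; auto).
    replace ((eps * v0 * v0 / 3 * N) / (v0 * v0)) with (eps * N / 3) in HT1 by (field; lra).
    replace ((eps * v0 / 3 * N + eps * v0 / 3 * N) / v0) with (2 * (eps * N) / 3) in HT2
      by (field; lra).
    eapply Rle_trans; [apply Rabs_triang|]. lra.
  - intros phi xi Hphi Hconst.
    destruct (Hdelta phi Hphi) as [Hd0 Ha0].
    pose proof (Hdr phi Hphi) as Hd0r.
    pose proof (Hvpos xi) as Hvx.
    assert (Hd : delta phi = a / v xi).
    { assert (HI : RInt (fun s => v (phi s)) (- delta phi) 0 = RInt (fun _ => v xi) (- delta phi) 0).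
      { apply RInt_ext. intros x Hx. rewrite Hconst; auto.
        apply (between_in r (- delta phi) 0 x Hd0r Hz); lra. }
      rewrite HI, RInt_const in Ha0.
      change (scal (0 - - delta phi) (v xi)) with ((0 - - delta phi) * v xi) in Ha0.
      rewrite Ha0. field. lra. }
    split; auto.
    intros chi Hchi. pose proof (inC_CC r chi Hr0' Hchi) as Cchi.
    unfold Ddelta. rewrite <- Hd.
    rewrite (Hconst (- delta phi)) by auto.
    assert (HI : RInt (fun s => v' (phi s) * chi s) (- delta phi) 0 =
                 RInt (fun s => v' xi * chi s) (- delta phi) 0).
    { apply RInt_ext. intros x Hx. rewrite Hconst; auto.
      apply (between_in r (- delta phi) 0 x Hd0r Hz); lra. }
    rewrite HI.
    assert (HS : RInt (fun s => v' xi * chi s) (- delta phi) 0 = v' xi * RInt chi (- delta phi) 0).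
    { apply (RInt_scal (V := R_CompleteNormedModule)). apply Ex; auto. }
    rewrite HS. field. lra.
Qed.
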